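(* Let $\mathcal{H}$ be a finite-dimensional complex Hilbert space, $\mathbf{C}\subseteq\mathcal{H}$ a subspace (code space) and $P$ the orthogonal projector onto $\mathbf{C}$. Let $\mathcal{N}: B(\mathcal{H})\to B(\mathcal{H})$ be a semi-positive trace-preserving map with an operator-sum representation $\mathcal{N}(\rho)=\sum_i \operatorname{sign}(i)E_i\rho E_i^\dagger$, where $E_i\in B(\mathcal{H})$ and $\operatorname{sign}(i)=-1$ for $i$ in a nonempty subset $\mathbf{J}$ of the indices and $\operatorname{sign}(i)=1$ otherwise. If there is a Hermitian matrix $\alpha=(\alpha_{ij})$ such that $$P E_i^\dagger E_j P=\alpha_{ij}P\quad\text{for all } i,j,$$ then there exists a CPTP map $\mathcal{R}: B(\mathcal{H})\to B(\mathcal{H})$ such that $\mathcal{R}(\mathcal{N}(P\sigma P))=P\sigma P$ for every $\sigma\in B(\mathcal{H})$ (in particular $\mathcal{R}\circ\mathcal{N}(\rho)=\rho$ for every density matrix $\rho$ supported on $\mathbf{C}$).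
   Context: A density matrix is a positive semidefinite operator of trace one. A linear map $\Psi$ on $B(\mathcal{H})$ is Hermitian-preserving if $\Psi(X^\dagger)=\Psi(X)^\dagger$, trace-preserving if $\operatorname{Tr}\Psi(X)=\operatorname{Tr}X$, and semi-positive if it is Hermitian-preserving and there exists an invertible density matrix $\rho$ such that $\Psi(\rho)$ is an invertible density matrix. *)

(* Defs.v *)
(* H = C^n with C = R[i], the complex numbers over a real closed field R. *)
From HB Require Import structures.
From mathcomp Require Import all_boot all_order all_algebra.
From mathcomp Require Import complex.
Set Implicit Arguments. Unset Strict Implicit. Unset Printing Implicit Defensive.
Import Order.TTheory GRing.Theory Num.Theory.
Local Open Scope ring_scope.

Section Defs.
Variable C : numClosedFieldType.
Variable n : nat.

Definition adj (p q : nat) (A : 'M[C]_(p, q)) : 'M[C]_(q, p) := (map_mx Num.conj A)^T.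

Definition is_hermitian (p : nat) (A : 'M[C]_p) : Prop := adj A = A.

Definition psd (p : nat) (A : 'M[C]_p) : Prop :=
  is_hermitian A /\ forall v : 'cV[C]_p, 0 <= (adj v *m A *m v) 0 0.

Definition density (A : 'M[C]_n) : Prop := psd A /\ \tr A = 1.

Definition invertible (A : 'M[C]_n) : Prop := A \in unitmx.

Definition hermitian_preserving (Psi : 'M[C]_n -> 'M[C]_n) : Prop :=
  forall X, Psi (adj X) = adj (Psi X).

Definition trace_preserving (Psi : 'M[C]_n -> 'M[C]_n) : Prop :=
  forall X, \tr (Psi X) = \tr X.

Definition semi_positive (Psi : 'M[C]_n -> 'M[C]_n) : Prop :=
  hermitian_preserving Psi /\
  exists rho, [/\ density rho, invertible rho, density (Psi rho) & invertible (Psi rho)].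

(* complete positivity: for every k, id_k (x) Psi maps PSD block matrices
   (k x k blocks of n x n matrices) to PSD block matrices *)
Definition completely_positive (Psi : 'M[C]_n -> 'M[C]_n) : Prop :=
  forall (k : nat) (X : 'I_k -> 'I_k -> 'M[C]_n),
    psd (\mxblock_(i < k, j < k) X i j : 'M[C]_(\sum_(i < k) n)) ->
    psd (\mxblock_(i < k, j < k) Psi (X i j) : 'M[C]_(\sum_(i < k) n)).

Definition CPTP (Psi : 'M[C]_n -> 'M[C]_n) : Prop :=
  linear Psi /\ completely_positive Psi /\ trace_preserving Psi.

Definition orth_projector (P : 'M[C]_n) : Prop := P *m P = P /\ adj P = P.

Definition signed_opsum (m : nat) (E : 'I_m -> 'M[C]_n) (J : {set 'I_m})
  (rho : 'M[C]_n) : 'M[C]_n :=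
  \sum_(i < m) ((if i \in J then -1 else 1) *: (E i *m rho *m adj (E i))).

End Defs.

(* Main.v *)
Require Import Defs.
From HB Require Import structures.
From mathcomp Require Import all_boot all_order all_algebra.
From mathcomp Require Import complex.
From mathcomp Require Import sesquilinear spectral.
Set Implicit Arguments. Unset Strict Implicit. Unset Printing Implicit Defensive.
Import Order.TTheory GRing.Theory Num.Theory.
Local Open Scope ring_scope.

From mathcomp Require Import ring.
Section AdjLemmas.
Variable C : numClosedFieldType.

Lemma adjE p q (A : 'M[C]_(p,q)) i j : adj A i j = (A j i)^*.
Proof. by rewrite /adj !mxE. Qed.

Lemma adjK p q (A : 'M[C]_(p, q)) : adj (adj A) = A.
Proof. by apply/matrixP => i j; rewrite !mxE conjCK. Qed.

Lemma adjD p q (A B : 'M[C]_(p, q)) : adj (A + B) = adj A + adj B.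
Proof. by apply/matrixP => i j; rewrite !mxE rmorphD. Qed.

Lemma adjN p q (A : 'M[C]_(p, q)) : adj (- A) = - adj A.
Proof. by apply/matrixP => i j; rewrite !mxE rmorphN. Qed.

Lemma adjB p q (A B : 'M[C]_(p, q)) : adj (A - B) = adj A - adj B.
Proof. by rewrite adjD adjN. Qed.

Lemma adj0 p q : adj (0 : 'M[C]_(p, q)) = 0.
Proof. by apply/matrixP => i j; rewrite !mxE rmorph0. Qed.

Lemma adjZ p q a (A : 'M[C]_(p, q)) : adj (a *: A) = a^* *: adj A.
Proof. by apply/matrixP => i j; rewrite !mxE rmorphM. Qed.

Lemma adj_sum (I : finType) p q (F : I -> 'M[C]_(p, q)) :
  adj (\sum_i F i) = \sum_i adj (F i).
Proof.
apply/matrixP => i j; rewrite !mxE !summxE rmorph_sum.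
by apply: eq_bigr => k _; rewrite !mxE.
Qed.

Lemma adjM p q r (A : 'M[C]_(p, q)) (B : 'M[C]_(q, r)) :
  adj (A *m B) = adj B *m adj A.
Proof. by rewrite /adj map_mxM trmx_mul. Qed.

Lemma adj1 p : adj (1%:M : 'M[C]_p) = 1%:M.
Proof. by rewrite /adj map_mx1 trmx1. Qed.

Lemma tr_adjM_ge0 p q (A : 'M[C]_(p, q)) : 0 <= \tr (adj A *m A).
Proof.
rewrite /mxtrace; apply: sumr_ge0 => i _; rewrite mxE.
apply: sumr_ge0 => j _; rewrite !mxE mulrC -normCK.
by rewrite exprn_ge0.
Qed.

Lemma tr_adjM_eq0 p q (A : 'M[C]_(p, q)) : \tr (adj A *m A) = 0 -> A = 0.
Proof.
have ge : forall i, 0 <= (adj A *m A) i i.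
  move=> i; rewrite mxE; apply: sumr_ge0 => l _.
  by rewrite !mxE mulrC -normCK exprn_ge0.
rewrite /mxtrace => H; apply/matrixP => j i; rewrite mxE.
have H2 := psumr_eq0P (fun i _ => ge i) H isT.
move: H2 => /(_ i); rewrite mxE => H2.
have ge2 : forall k, predT k -> 0 <= adj A i k * A k i.
  by move=> k _; rewrite !mxE mulrC -normCK exprn_ge0.
have := psumr_eq0P ge2 H2 (i := j) isT.
rewrite !mxE mulrC -normCK => /eqP; rewrite expf_eq0 /= normr_eq0.
by move=> /eqP.
Qed.

Lemma psd_conj p q (A : 'M[C]_(q, p)) (Y : 'M[C]_p) :
  psd Y -> psd (A *m Y *m adj A).
Proof.
move=> [hY pY]; split.
  by rewrite /is_hermitian !adjM adjK hY mulmxA.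
move=> v; have := pY (adj A *m v).
by rewrite adjM adjK !mulmxA.
Qed.

Lemma psd_add p (Y Z : 'M[C]_p) : psd Y -> psd Z -> psd (Y + Z).
Proof.
move=> [hY pY] [hZ pZ]; split; first by rewrite /is_hermitian adjD hY hZ.
move=> v; rewrite mulmxDr mulmxDl mxE; exact: addr_ge0.
Qed.

Lemma psd0 p : psd (0 : 'M[C]_p).
Proof.
split; first by rewrite /is_hermitian adj0.
by move=> v; rewrite mulmx0 mul0mx mxE.
Qed.

Lemma psd_scale p (w : C) (Y : 'M[C]_p) : 0 <= w -> psd Y -> psd (w *: Y).
Proof.
move=> w0 [hY pY]; split.
  by rewrite /is_hermitian adjZ hY conj_Creal // ger0_real.
by move=> v; rewrite -scalemxAr -scalemxAl mxE mulr_ge0.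
Qed.

Lemma psd_sum (I : finType) p (F : I -> 'M[C]_p) :
  (forall i, psd (F i)) -> psd (\sum_i F i).
Proof.
move=> H; elim/big_ind: _ => //; [exact: psd0 | exact: psd_add].
Qed.

End AdjLemmas.
Section CP.
Variable C : numClosedFieldType.

Lemma adj_mxblock k l (p_ : 'I_k -> nat) (q_ : 'I_l -> nat)
  (B : forall i j, 'M[C]_(p_ i, q_ j)) :
  adj (\mxblock_(i, j) B i j) = \mxblock_(j, i) adj (B i j).
Proof. by apply/matrixP => i j; rewrite !mxE. Qed.

Lemma mxblockZ k l (p_ : 'I_k -> nat) (q_ : 'I_l -> nat) (a : C)
  (B : forall i j, 'M[C]_(p_ i, q_ j)) :
  \mxblock_(i, j) (a *: B i j) = a *: \mxblock_(i, j) B i j.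
Proof. by apply/matrixP => i j; rewrite !mxE. Qed.

Lemma sum_if_l k p q r (i : 'I_k) (A : 'M[C]_(p, q)) (B : 'I_k -> 'M[C]_(q, r)) :
  \sum_l ((if i == l then A else 0) *m B l) = A *m B i.
Proof.
rewrite (bigD1 i) //= eqxx big1 ?addr0 //.
by move=> l; rewrite eq_sym => /negbTE ->; rewrite mul0mx.
Qed.

Lemma sum_if_r k p q r (j : 'I_k) (A : 'M[C]_(r, q)) (B : 'I_k -> 'M[C]_(p, q)) :
  \sum_l (B l *m adj (if j == l then A else 0)) = B j *m adj A.
Proof.
rewrite (bigD1 j) //= eqxx big1 ?addr0 //.
by move=> l; rewrite eq_sym => /negbTE ->; rewrite adj0 mulmx0.
Qed.

Lemma block_conj k n (A : 'M[C]_n) (X : 'I_k -> 'I_k -> 'M[C]_n) :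
  (\mxblock_(i < k, j < k) (A *m X i j *m adj A) : 'M_(\sum_(i < k) n)) =
  (\mxblock_(i < k, j < k) (if i == j then A else 0) : 'M_(\sum_(i < k) n))
   *m (\mxblock_(i < k, j < k) X i j : 'M_(\sum_(i < k) n))
   *m adj (\mxblock_(i < k, j < k) (if i == j then A else 0) : 'M_(\sum_(i < k) n)).
Proof.
rewrite mul_mxblock adj_mxblock mul_mxblock.
apply: eq_mxblock => i j.
under eq_bigr do rewrite sum_if_l.
by rewrite sum_if_r.
Qed.

Lemma kraus_cp (T : finType) n (w : T -> C) (A : T -> 'M[C]_n) (B : 'M[C]_n) :
  (forall t, 0 <= w t) ->
  completely_positive (fun X => \sum_t w t *: (A t *m X *m adj (A t))
                                 + B *m X *m adj B).
Proof.
move=> w0 k X HY.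
rewrite mxblockD; apply: psd_add; last by rewrite block_conj; exact: psd_conj.
rewrite mxblock_sum; apply: psd_sum => t; rewrite mxblockZ.
by apply: psd_scale => //; rewrite block_conj; exact: psd_conj.
Qed.

Lemma kraus_linear (T : finType) n (w : T -> C) (A : T -> 'M[C]_n) (B : 'M[C]_n) :
  linear (fun X => \sum_t w t *: (A t *m X *m adj (A t)) + B *m X *m adj B).
Proof.
move=> a X Y /=.
have h Z : Z *m (a *: X + Y) *m adj Z = a *: (Z *m X *m adj Z) + Z *m Y *m adj Z.
  by rewrite mulmxDr mulmxDl -scalemxAr -scalemxAl.
rewrite h; under eq_bigr do rewrite h scalerDr scalerA mulrC -scalerA.
by rewrite big_split /= -scaler_sumr scalerDr addrACA.
Qed.

Lemma kraus_tp (T : finType) n (w : T -> C) (A : T -> 'M[C]_n) (B : 'M[C]_n) :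
  \sum_t w t *: (adj (A t) *m A t) + adj B *m B = 1%:M ->
  trace_preserving (fun X => \sum_t w t *: (A t *m X *m adj (A t)) + B *m X *m adj B).
Proof.
move=> H X; rewrite mxtraceD raddf_sum /=.
have -> : \tr X = \tr ((\sum_t w t *: (adj (A t) *m A t) + adj B *m B) *m X).
  by rewrite H mul1mx.
rewrite mulmxDl mxtraceD mulmx_suml raddf_sum /=; congr (_ + _).
  apply: eq_bigr => t _; rewrite -!scalemxAl !mxtraceZ; congr (_ * _).
  by rewrite mxtrace_mulC mulmxA.
by rewrite mxtrace_mulC mulmxA.
Qed.

End CP.
Section Main.
Variables (C : numClosedFieldType) (n m : nat) (P : 'M[C]_n)
  (E : 'I_m -> 'M[C]_n) (J : {set 'I_m}) (alpha : 'M[C]_m).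
Hypotheses (PP : P *m P = P) (adjP : adj P = P) (halpha : adj alpha = alpha)
  (KL : forall i j, P *m adj (E i) *m E j *m P = alpha i j *: P)
  (TP : trace_preserving (signed_opsum E J)).

Let U := spectralmx alpha.
Let d k := spectral_diag alpha 0 k.

Lemma adj_tc p q (A : 'M[C]_(p, q)) : adj A = (A ^t* )%sesqui.
Proof. by rewrite /adj map_trmx. Qed.

Lemma UU : U *m adj U = 1%:M.
Proof. by rewrite adj_tc; apply/unitarymxP; exact: spectral_unitarymx. Qed.

Lemma invU : invmx U = adj U.
Proof. by rewrite adj_tc invmx_unitary //; exact: spectral_unitarymx. Qed.

Lemma UU' : adj U *m U = 1%:M.
Proof. by rewrite -invU mulVmx // spectral_unit. Qed.

Lemma alphaE : alpha = adj U *m diag_mx (spectral_diag alpha) *m U.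
Proof.
rewrite -invU; apply/orthomx_spectralP.
by apply/normalmxP; rewrite -adj_tc halpha.
Qed.

Lemma UalphaE : U *m alpha = diag_mx (spectral_diag alpha) *m U.
Proof. by rewrite {1}alphaE !mulmxA UU mul1mx. Qed.

Let F k := \sum_j (U k j)^* *: E j.
Let M k := F k *m P.

Lemma adjMk k : adj (M k) = P *m \sum_j U k j *: adj (E j).
Proof.
rewrite /M adjM adjP /F adj_sum; congr (_ *m _).
by apply: eq_bigr => j _; rewrite adjZ conjCK.
Qed.

Lemma a_lem k j : adj (M k) *m E j *m P = (d k * U k j) *: P.
Proof.
rewrite adjMk mulmx_sumr !mulmx_suml.
under eq_bigr do rewrite -scalemxAr -!scalemxAl KL scalerA.
rewrite -scaler_suml; congr (_ *: _).
have := congr1 (fun A : 'M[C]_m => A k j) UalphaE.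
by rewrite mul_diag_mx !mxE => <-.
Qed.

Lemma b_lem k l : adj (M k) *m M l = ((k == l)%:R * d k) *: P.
Proof.
rewrite {2}/M /F mulmx_suml mulmx_sumr.
under eq_bigr do rewrite -scalemxAl -scalemxAr mulmxA a_lem scalerA.
rewrite -scaler_suml; congr (_ *: _).
have := congr1 (fun A : 'M[C]_m => A k l) UU.
rewrite !mxE => <-; rewrite mulr_suml; apply: eq_bigr => j _.
by rewrite !mxE ?adjE; ring.
Qed.

Lemma c_lem j : E j *m P = \sum_k U k j *: M k.
Proof.
rewrite /M /F.
under eq_bigr do rewrite mulmx_suml scaler_sumr.
rewrite exchange_big /=.
rewrite (bigD1 j) //= [X in _ + X]big1 ?addr0.
  under eq_bigr do rewrite -scalemxAl scalerA.
  rewrite -scaler_suml.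
  have := congr1 (fun A : 'M[C]_m => A j j) UU'.
  rewrite !mxE ?adjE eqxx /= mulr1n => H.
  rewrite -[LHS]scale1r; congr (_ *: _); rewrite -H.
  by apply: eq_bigr => k _; rewrite adjE mulrC.
move=> i ij.
under eq_bigr do rewrite -scalemxAl scalerA.
rewrite -scaler_suml.
have := congr1 (fun A : 'M[C]_m => A i j) UU'.
rewrite !mxE (negbTE ij) /= mulr0n => H.
suff -> : \sum_k U k j * (U k i)^* = 0 by rewrite scale0r.
rewrite -[RHS]H; apply: eq_bigr => k _; by rewrite adjE mulrC.
Qed.

Lemma d_lem k : ~~ (0 < d k) -> M k = 0.
Proof.
move=> dk.
have h := b_lem k k; rewrite eqxx mul1r in h.
have trP : \tr P = \tr (adj P *m P) by rewrite adjP PP.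
have := tr_adjM_ge0 (M k); rewrite h mxtraceZ => h0.
case: (eqVneq (\tr (adj (M k) *m M k)) 0) => [/tr_adjM_eq0 //|].
rewrite h mxtraceZ => hne.
have trP0 : 0 <= \tr P by rewrite trP tr_adjM_ge0.
have hpos : 0 < d k * \tr P by rewrite lt_def hne h0.
have trPne : \tr P != 0 by apply: contraTneq hpos => ->; rewrite mulr0 ltxx.
have trPpos : 0 < \tr P by rewrite lt_def trPne trP0.
by move: hpos; rewrite pmulr_lgt0 // (negbTE dk).
Qed.

Let c k := if 0 < d k then (d k)^-1 else 0.

Lemma c_ge0 k : 0 <= c k.
Proof. by rewrite /c; case: ifP => // /ltW; rewrite invr_ge0. Qed.

Lemma c_conj k : (c k)^* = c k.
Proof. by rewrite conj_Creal // ger0_real // c_ge0. Qed.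

Lemma key k : M k = 0 \/ (c k * d k = 1 /\ (d k)^* = d k).
Proof.
rewrite /c; case: ifP => [dk|/negbT /d_lem]; last by left.
right; split; first by rewrite mulVf // gt_eqF.
by rewrite conj_Creal // gtr0_real.
Qed.

Let G := \sum_k c k *: (M k *m adj (M k)).

Lemma MP k : M k *m P = M k.
Proof. by rewrite /M -mulmxA PP. Qed.

Lemma GM l : G *m M l = M l.
Proof.
rewrite /G mulmx_suml.
under eq_bigr do rewrite -scalemxAl -mulmxA b_lem -scalemxAr MP scalerA.
rewrite (bigD1 l) //= big1 ?addr0.
  by rewrite eqxx mul1r; case: (key l) => [->|[-> _]]; rewrite ?scaler0 ?scale1r.
by move=> k /negbTE ->; rewrite mul0r mulr0 scale0r.
Qed.

Lemma adjG : adj G = G.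
Proof.
rewrite /G adj_sum; apply: eq_bigr => k _.
by rewrite adjZ adjM adjK c_conj.
Qed.

Lemma GG : G *m G = G.
Proof.
rewrite {2}/G mulmx_sumr; apply: eq_bigr => k _.
by rewrite -scalemxAr mulmxA GM.
Qed.

Lemma GEP j : (1%:M - G) *m (E j *m P) = 0.
Proof.
have h : G *m (E j *m P) = E j *m P.
  rewrite c_lem mulmx_sumr; apply: eq_bigr => k _.
  by rewrite -scalemxAr GM.
by rewrite mulmxBl mul1mx h subrr.
Qed.

Definition Rec (X : 'M[C]_n) :=
  \sum_k c k *: (adj (M k) *m X *m adj (adj (M k)))
  + (1%:M - G) *m X *m adj (1%:M - G).

Lemma Rec_CPTP : CPTP Rec.
Proof.
split; first exact: kraus_linear.
split; first by apply: kraus_cp; exact: c_ge0.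
apply: kraus_tp.
rewrite adjB adj1 adjG.
under eq_bigr do rewrite adjK.
rewrite -/G mulmxBr !mulmxBl mul1mx mulmx1 GG.
by rewrite mul1mx subrr subr0 addrC subrK.
Qed.

Let s j : C := if j \in J then -1 else 1.

Lemma tr_mul_delta p (A : 'M[C]_p) a b : \tr (A *m delta_mx b a) = A a b.
Proof.
rewrite /mxtrace (bigD1 a) //= big1 ?addr0.
  rewrite mxE (bigD1 b) //= big1 ?addr0; first by rewrite mxE !eqxx mulr1.
  by move=> r /negbTE rb; rewrite mxE rb mulr0.
by move=> l /negbTE la; rewrite mxE big1 // => r _; rewrite mxE la andbF mulr0.
Qed.

Lemma S_one : \sum_j s j *: (adj (E j) *m E j) = 1%:M.
Proof.
set S := \sum_j _.
have trS X : \tr (signed_opsum E J X) = \tr (S *m X).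
  rewrite /signed_opsum raddf_sum /S mulmx_suml raddf_sum /=.
  apply: eq_bigr => j _; rewrite -scalemxAl !mxtraceZ; congr (_ * _).
  by rewrite mxtrace_mulC mulmxA.
apply/matrixP => a b.
have := TP (delta_mx b a); rewrite trS tr_mul_delta => ->.
by rewrite -[delta_mx b a]mul1mx tr_mul_delta.
Qed.

Lemma alpha_jj j : alpha j j = \sum_k (U k j)^* * d k * U k j.
Proof.
rewrite {1}alphaE mxE; apply: eq_bigr => k _.
by rewrite mul_mx_diag mxE adjE.
Qed.

Lemma Pcoef : (\sum_j s j * alpha j j) *: P = P.
Proof.
have e : P = P *m (\sum_j s j *: (adj (E j) *m E j)) *m P.
  by rewrite S_one mulmx1 PP.
rewrite [RHS]e mulmx_sumr mulmx_suml scaler_suml.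
apply: eq_bigr => j _.
by rewrite -scalemxAr -scalemxAl !mulmxA KL scalerA.
Qed.

Lemma term k j : (c k * (s j * ((d k * U k j) * (d k * U k j)^*))) *: P
  = (s j * ((U k j)^* * d k * U k j)) *: P.
Proof.
case: (key k) => [Mk0|[cd dc]].
  have h := b_lem k k; rewrite Mk0 mulmx0 eqxx mul1r in h.
  have L : (c k * (s j * ((d k * U k j) * (d k * U k j)^*))) *: P
      = (c k * s j * U k j * (d k * U k j)^*) *: (d k *: P).
    by rewrite scalerA; congr (_ *: _); ring.
  have R : (s j * ((U k j)^* * d k * U k j)) *: P
      = (s j * (U k j)^* * U k j) *: (d k *: P).
    by rewrite scalerA; congr (_ *: _); ring.
  by rewrite L R -h !scaler0.
congr (_ *: _); rewrite [(d k * U k j)^*]rmorphM /= dc.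
transitivity ((c k * d k) * (s j * (d k * U k j * (U k j)^*))); first ring.
by rewrite cd mul1r; ring.
Qed.

Lemma conj_sum (K : 'M[C]_n) (B : 'I_m -> 'M[C]_n) (sg : 'M[C]_n) :
  K *m (\sum_j s j *: (B j *m sg *m adj (B j))) *m adj K
  = \sum_j s j *: ((K *m B j) *m sg *m adj (K *m B j)).
Proof.
rewrite mulmx_sumr mulmx_suml; apply: eq_bigr => j _.
by rewrite -scalemxAr -scalemxAl adjM !mulmxA.
Qed.

Lemma Rec_ok sigma : Rec (signed_opsum E J (P *m sigma *m P)) = P *m sigma *m P.
Proof.
have h1 : signed_opsum E J (P *m sigma *m P)
    = \sum_j s j *: ((E j *m P) *m sigma *m adj (E j *m P)).
  by apply: eq_bigr => j _; rewrite adjM adjP !mulmxA.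
rewrite /Rec h1 conj_sum.
rewrite [X in _ + X]big1 ?addr0; last by move=> j _; rewrite GEP !mul0mx scaler0.
set Q := P *m sigma *m P.
have hQ x : x *: Q = (x *: P) *m sigma *m P by rewrite /Q !scalemxAl.
have hQ2 a b : (a *: P) *m sigma *m (b *: P) = (a * b) *: Q.
  by rewrite -scalemxAr -!scalemxAl scalerA mulrC.
under eq_bigr do rewrite conj_sum.
have -> : \sum_k c k *: \sum_j s j *: ((adj (M k) *m (E j *m P)) *m sigma
            *m adj (adj (M k) *m (E j *m P)))
        = \sum_k \sum_j (s j * ((U k j)^* * d k * U k j)) *: Q.
  apply: eq_bigr => k _; rewrite scaler_sumr; apply: eq_bigr => j _.
  rewrite mulmxA a_lem adjZ adjP hQ2 !scalerA.
  by rewrite [LHS]hQ term -hQ.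
rewrite exchange_big /=.
transitivity ((\sum_j s j * alpha j j) *: Q).
  rewrite scaler_suml; apply: eq_bigr => j _.
  by rewrite -scaler_suml alpha_jj mulr_sumr.
by rewrite hQ Pcoef /Q.
Qed.

End Main.

Unset Implicit Arguments.

Theorem theorem6 (R : rcfType) (n m : nat) (P : 'M[R[i]]_n)
  (E : 'I_m -> 'M[R[i]]_n) (J : {set 'I_m}) :
  orth_projector P ->
  J != set0 ->
  semi_positive (signed_opsum E J) ->
  trace_preserving (signed_opsum E J) ->
  (exists alpha : 'M[R[i]]_m, is_hermitian alpha /\
     forall i j, P *m adj (E i) *m E j *m P = alpha i j *: P) ->
  exists Rec : 'M[R[i]]_n -> 'M[R[i]]_n,
    CPTP Rec /\ forall sigma : 'M[R[i]]_n,
      Rec (signed_opsum E J (P *m sigma *m P)) = P *m sigma *m P.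
Proof.
move=> [PP adjP] _ _ TP [alpha [halpha KL]].
exists (Rec P E alpha); split.
  exact: Rec_CPTP.
exact: Rec_ok.
Qed.
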